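(* Let $X$ be a positive random variable with law $\mathbb{P}$. Suppose 1. there exist $\sigma\in(0,1]$ and $C_\sigma<\infty$ such that $\mathbb{P}(X\in I)\le C_\sigma|I|^\sigma$ for all Borel sets $I\subset[0,\infty)$ with Lebesgue measure $|I|\le1$; 2. there exists $\tau>0$ with $\mathbb{E}[X^\tau]<\infty$. Then for all $\alpha\in(0,1/2)$, $$\delta(X,\alpha)\ge\min\Big\{1,\Big(\frac{1-2\alpha}{C_\sigma}\Big)^{1/\sigma}\Big\}\Big(\frac{\alpha}{\mathbb{E}[X^\tau]}\Big)^{1/\tau}.$$
   Context: For $\alpha\in(0,1/2]$ the relative $\alpha$-width of a positive random variable $X$ is $\delta(X,\alpha):=1-\xi_-(X,\alpha)/\xi_+(X,\alpha)$, where $\xi_-(X,\alpha):=\sup\{\xi:\mathbb{P}(X<\xi)\le\alpha\}$ and $\xi_+(X,\alpha):=\inf\{\xi:\mathbb{P}(X>\xi)\le\alpha\}$. *)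

(* Defs.v *)
From HB Require Import structures.
From mathcomp Require Import all_boot all_order all_algebra.
From mathcomp Require Import all_classical all_reals all_analysis.
Set Implicit Arguments. Unset Strict Implicit. Unset Printing Implicit Defensive.
Import Order.TTheory GRing.Theory Num.Theory.
Local Open Scope classical_set_scope.
Local Open Scope ring_scope.

Definition xi_minus d (T : measurableType d) (R : realType)
  (P : probability T R) (X : T -> R) (a : R) : R :=
  sup [set xi : R | (P [set w | (X w < xi)%R] <= a%:E)%E].

Definition xi_plus d (T : measurableType d) (R : realType)
  (P : probability T R) (X : T -> R) (a : R) : R :=
  inf [set xi : R | (P [set w | (xi < X w)%R] <= a%:E)%E].

Definition rel_width d (T : measurableType d) (R : realType)
  (P : probability T R) (X : T -> R) (a : R) : R :=
  1 - xi_minus P X a / xi_plus P X a.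

(* Main.v *)
Require Import Defs.
From HB Require Import structures.
From mathcomp Require Import all_boot all_order all_algebra.
From mathcomp Require Import all_classical all_reals all_analysis.
From mathcomp Require Import lra ring.
Import Order.TTheory GRing.Theory Num.Theory.
Local Open Scope classical_set_scope.
Local Open Scope ring_scope.

Lemma mlt d (T : measurableType d) (R : realType) (P : probability T R)
  (X : {RV P >-> R}) (u : R) : measurable [set w | X w < u].
Proof.
have -> : [set w | X w < u] = X @^-1` [set` `]-oo, u[] .
  by apply/seteqP; split=> w /=; rewrite in_itv /=.
exact: measurable_funPTI (measurable_itv _).
Qed.

Lemma mgt d (T : measurableType d) (R : realType) (P : probability T R)
  (X : {RV P >-> R}) (u : R) : measurable [set w | u < X w].
Proof.
have -> : [set w | u < X w] = X @^-1` [set` `]u, +oo[] .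
  by apply/seteqP; split=> w /=; rewrite in_itv /= andbT.
exact: measurable_funPTI (measurable_itv _).
Qed.

Arguments mlt {d T R P} X u.
Lemma mcc d (T : measurableType d) (R : realType) (P : probability T R)
  (X : {RV P >-> R}) (u v : R) : measurable (X @^-1` [set` `[u, v]]).
Proof. exact: measurable_funPTI (measurable_itv _). Qed.

Arguments mgt {d T R P} X u.
Arguments mcc {d T R P} X u v.
Lemma finP d (T : measurableType d) (R : realType) (P : probability T R)
  (A : set T) : measurable A -> P A = (fine (P A))%:E.
Proof. by move=> mA; rewrite fineK // fin_num_measure. Qed.

Lemma cover d (T : measurableType d) (R : realType) (P : probability T R)
  (X : {RV P >-> R}) (al u v : R) :
  (P [set w | (X w < u)%R] <= al%:E)%E -> (P [set w | (v < X w)%R] <= al%:E)%E ->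
  1 - 2 * al <= fine (P (X @^-1` [set` `[u, v]])).
Proof.
move=> hu hv.
have h1 : (1 <= P [set w | (X w < u)%R] + P (X @^-1` [set` `[u, v]]) + P [set w | (v < X w)%R])%E.
  rewrite -(probability_setT P).
  set A := [set w | (X w < u)%R]; set B := X @^-1` [set` `[u, v]];
  set C := [set w | (v < X w)%R].
  have mA : measurable A by exact: mlt.
  have mB : measurable B by exact: mcc.
  have mC : measurable C by exact: mgt.
  apply: (@le_trans _ _ (P (A `|` B `|` C))).
    apply: le_measure.
    - rewrite inE; exact: measurableT.
    - by rewrite inE; apply: measurableU => //; apply: measurableU.
    move=> w _; rewrite /A /B /C /= in_itv /=.
    case: (ltP (X w) u) => hwu; first by left; left.
    case: (leP (X w) v) => hwv; first by left; right.
    by right.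
  have mAB : measurable (A `|` B) by apply: measurableU.
  apply: le_trans; first exact: (measureU2 P mAB mC).
  by apply: leeD => //; apply: measureU2.
move: h1; rewrite (@finP _ _ _ P _ (mcc X u v)).
have : (P [set w | (X w < u)%R] + (fine (P (X @^-1` [set` `[u, v]])))%:E + P [set w | (v < X w)%R]
   <= al%:E + (fine (P (X @^-1` [set` `[u, v]])))%:E + al%:E)%E.
  by apply: leeD => //; apply: leeD.
move=> H1 H2; have := le_trans H2 H1; rewrite -!EFinD lee_fin => H; lra.
Qed.

Arguments cover {d T R P} X al u v.
Lemma markovX d (T : measurableType d) (R : realType) (P : probability T R)
  (X : {RV P >-> R}) (hpos : forall w, 0 < X w) (tau : R) (htau : 0 < tau)
  (hmom : ('E_P[fun w => (X w `^ tau)%R] < +oo)%E) (al t : R) :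
  0 < t -> fine 'E_P[fun w => (X w `^ tau)%R] <= al * t ->
  (P [set w | (t `^ tau^-1 < X w)%R] <= al%:E)%E.
Proof.
move=> t0 hM.
set s := t `^ tau^-1.
have s0 : 0 < s by apply: powR_gt0.
have st : s `^ tau = t.
  by rewrite /s -powRrM mulVf ?gt_eqF // powRr1 // ltW.
have := @markov _ _ _ P X (fun x => x `^ tau) s s0 (measurable_realfun.measurable_powR _)
  (fun r _ => powR_ge0 _ _) (ge0_ler_powR (ltW htau)).
have -> : (fun x => x `^ tau) \o (fun x => `|x|) \o X = (fun w => X w `^ tau).
  by apply: funext => w /=; rewrite gtr0_norm.
have -> : [set x | (s%:E <= `|(X x)%:E|)%E] = X @^-1` [set` `[s, +oo[].
  by apply/seteqP; split=> w /=; rewrite in_itv /= andbT gtr0_norm // lee_fin.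
have Ege0 : (0 <= 'E_P[fun w => (X w `^ tau)%R])%E.
  by apply: expectation_ge0 => w; apply: powR_ge0.
have mS : measurable (X @^-1` [set` `[s, +oo[]) by exact: measurable_funPTI (measurable_itv _).
rewrite -(@fineK _ 'E_P[_]); last by rewrite ge0_fin_numE.
rewrite (@finP _ _ _ P _ mS) st -EFinM lee_fin => H.
apply: (@le_trans _ _ (P (X @^-1` [set` `[s, +oo[]))).
  apply: le_measure.
  - by rewrite inE; apply: mgt.
  - by rewrite inE.
  by move=> w /= hw; rewrite in_itv /= andbT ltW.
rewrite (@finP _ _ _ P _ mS) lee_fin.
have : t * fine (P (X @^-1` [set` `[s, +oo[])) <= al * t by apply: le_trans H hM.
by rewrite mulrC ler_pM2r.
Qed.

Theorem lemma3p8 (d : measure_display) (T : measurableType d) (R : realType)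
  (P : probability T R) (X : {RV P >-> R})
  (hpos : forall w, 0 < X w)
  (sigma C : R) (hsigma0 : 0 < sigma) (hsigma1 : sigma <= 1)
  (hreg : forall I : set R, measurable I -> I `<=` `[0, +oo[%classic ->
     (lebesgue_measure I <= 1)%E ->
     (P (X @^-1` I) <= (C * (fine (lebesgue_measure I)) `^ sigma)%:E)%E)
  (tau : R) (htau : 0 < tau)
  (hmom : ('E_P[fun w => (X w `^ tau)%R] < +oo)%E) :
  forall alpha : R, 0 < alpha -> alpha < 1 / 2 ->
    Num.min 1 (((1 - 2 * alpha) / C) `^ sigma^-1)
      * ((alpha / fine 'E_P[fun w => (X w `^ tau)%R]) `^ tau^-1)
    <= rel_width P X alpha.
Proof.
move=> al al0 al12.
rewrite /rel_width /xi_minus /xi_plus.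
set M := fine _.
set Sm := [set xi | _]; set Sp := [set xi | _].
set K := (_ / C) `^ _; set L := Num.min 1 K.
have M0 : 0 <= M by apply: fine_ge0; apply: expectation_ge0 => w; apply: powR_ge0.
have Sm0 : Sm 0.
  rewrite /Sm /=.
  have -> : [set w | (X w < 0)%R] = set0.
    by apply/seteqP; split => w //=; rewrite ltNge (ltW (hpos w)).
  by rewrite measure0 lee_fin ltW.
have smp : forall xi eta, Sm xi -> Sp eta -> xi <= eta.
  move=> xi eta hxi heta; rewrite leNgt; apply/negP => hlt.
  have := cover X al xi eta hxi heta.
  have -> : X @^-1` [set` `[xi, eta]] = set0.
    apply/seteqP; split => w //=; rewrite in_itv /= => /andP[h1 h2].
    by have := lt_le_trans hlt (le_trans h1 h2); rewrite ltxx.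
  rewrite measure0 /=; lra.
have tB : 0 < (M + 1) / al by apply: divr_gt0 => //; lra.
have B0 : Sp (((M + 1) / al) `^ tau^-1).
  apply: (@markovX _ _ _ P X hpos _ htau hmom _ _ tB).
  rewrite mulrC divfK ?gt_eqF //.
  by rewrite -/M; lra.
have hsup : has_sup Sm.
  split; first by exists 0.
  by exists (((M + 1) / al) `^ tau^-1) => x hx; exact: smp.
have hinf : has_inf Sp.
  split; first by exists (((M + 1) / al) `^ tau^-1).
  by exists 0 => x hx; exact: smp.
set a := sup Sm; set b := inf Sp.
have a0 : 0 <= a by apply: (ub_le_sup hsup.2).
have ab : a <= b.
  apply: lb_le_inf; first by exists (((M + 1) / al) `^ tau^-1).
  move=> eta heta; apply: ge_sup; first by exists 0.
  by move=> xi hxi; exact: smp.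
have L0 : 0 <= L by rewrite /L le_min ler01 powR_ge0.
have key : L <= b - a.
  rewrite leNgt; apply/negP => hlt.
  set e := (L - (b - a)) / 2.
  have e0 : 0 < e by rewrite /e; lra.
  have [xi hxi hxie] := sup_adherent e0 hsup.
  have [eta heta hetae] := inf_adherent e0 hinf.
  rewrite -/a in hxie; rewrite -/b in hetae.
  have [u [Su u0 ule]] : exists u, [/\ Sm u, 0 <= u & xi <= u].
    case: (leP 0 xi) => h; first by exists xi.
    by exists 0; split => //; apply: ltW.
  have hc := cover X al u eta Su heta.
  set I := [set` `[u, eta]] in hc.
  have mI : measurable I by exact: measurable_itv.
  have I0 : I `<=` `[0, +oo[%classic.
    move=> x; rewrite /I /= !in_itv /= andbT => /andP[h _]; exact: le_trans u0 h.
  have hl := lebesgue_measure_itv `[u, eta].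
  rewrite /= in hl.
  have he : e * 2 = L - (b - a) by rewrite /e; field.
  have [l [hlI l0 lL]] : exists l, [/\ lebesgue_measure I = l%:E, 0 <= l & l < L].
    move: hl; rewrite lte_fin; case: ifP => h hl.
    - exists (eta - u); split.
      + by rewrite /I hl -EFinD.
      + by rewrite subr_ge0 ltW.
      + lra.
    - by exists 0; split => //; lra.
  have L1 : L <= 1 by rewrite /L ge_min lexx.
  have hle1 : (lebesgue_measure I <= 1)%E by rewrite hlI lee_fin; lra.
  have hr := hreg I mI I0 hle1.
  rewrite hlI /= (@finP _ _ _ P (X @^-1` I)) ?lee_fin in hr; last exact: mcc.
  have := le_trans hc hr.
  case: (leP C 0) => hC.
    have : C * l `^ sigma <= 0 by apply: mulr_le0_ge0 => //; apply: powR_ge0.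
    lra.
  have lK : l < K by move: lL; rewrite /L lt_min => /andP[].
  have q0 : 0 <= (1 - 2 * al) / C by apply: divr_ge0; lra.
  have : l `^ sigma < K `^ sigma by apply: gt0_ltr_powR => //; rewrite nnegrE ?powR_ge0.
  rewrite /K -powRrM mulVf ?gt_eqF // powRr1 // => hlt2.
  have : C * l `^ sigma < 1 - 2 * al.
    by rewrite mulrC -ltr_pdivlMr.
  lra.
have [b0|bpos] := eqVneq b 0.
  have a00 : a = 0 by apply/eqP; rewrite eq_le a0 andbT -b0.
  have L00 : L = 0 by apply/eqP; rewrite eq_le L0 andbT; move: key; rewrite b0 a00 subr0.
  by rewrite L00 mul0r b0 invr0 mulr0 subr0 ler01.
have bgt : 0 < b by rewrite lt_neqAle eq_sym bpos andTb; exact: le_trans a0 ab.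
set q := (al / M) `^ tau^-1.
have qb : q * b <= 1.
  have [Mz|Mpos] := eqVneq M 0.
    by rewrite /q Mz invr0 mulr0 powR0 ?invr_neq0 ?gt_eqF // mul0r ler01.
  have Mgt : 0 < M by rewrite lt_neqAle eq_sym Mpos M0.
  have tX : 0 < M / al by apply: divr_gt0.
  have SX : Sp ((M / al) `^ tau^-1).
    apply: (@markovX _ _ _ P X hpos _ htau hmom _ _ tX).
    by rewrite -/M mulrC divfK ?gt_eqF.
  have bX : b <= (M / al) `^ tau^-1 by apply: (ge_inf hinf.2).
  apply: (@le_trans _ _ (q * (M / al) `^ tau^-1)).
    by apply: ler_wpM2l => //; apply: powR_ge0.
  rewrite /q -powRM; last 2 first.
  - by apply: divr_ge0; apply: ltW.
  - by apply: divr_ge0; apply: ltW.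
  have -> : al / M * (M / al) = 1.
    field.
    by rewrite !gt_eqF.
  by rewrite powR1.
have -> : 1 - a / b = (b - a) / b by field; rewrite gt_eqF.
apply: (@le_trans _ _ (L / b)).
  rewrite ler_pdivlMr // -mulrA.
  by rewrite -[X in _ <= X]mulr1; apply: ler_wpM2l.
by apply: ler_wpM2r => //; rewrite invr_ge0 ltW.
Qed.
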